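(* Let $\lambda_{\max}>1$, $\tau\in\mathbb{Z}_+$, $k_1\in(0,\lambda_{\max}-1]$ and $k_2\in(0,1]$, and consider the two-arrival policy $\lambda(q)=1+k_1$ for $0\le q<\tau$ and $\lambda(q)=1-k_2$ for $q\ge\tau$. Let $\pi$ be the stationary distribution of the associated queue-length chain and $\bar q\sim\pi$. Then $$\mathbb{E}[\bar q]\ge\frac{1}{\tau+\frac1{k_2}}\left(\frac{\tau(\tau-1)}{2}+\frac{\tau}{k_2}+\frac{1-k_2}{k_2^2}\right).$$
   Context: For a policy $\lambda:\mathbb{Z}_+\to[0,\lambda_{\max}]$, the queue-length chain is the continuous-time birth–death chain on $\mathbb{Z}_+$ with rate $\lambda(q)$ from $q$ to $q+1$ and rate $1$ from $q$ to $q-1$ ($q\ge1$), restricted to the states reachable from $0$. *)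

(* Defs.v *)
From Stdlib Require Import Reals Lra Lia.
From Coquelicot Require Import Coquelicot.
Open Scope R_scope.

(* States of the birth-death chain reachable from 0, for the arrival-rate
   policy lam : nat -> R (birth rate lam q from q to q+1, death rate 1
   from q+1 to q). *)
Inductive reachable (lam : nat -> R) : nat -> Prop :=
  | reach0 : reachable lam 0
  | reach_up : forall q, reachable lam q -> 0 < lam q -> reachable lam (S q)
  | reach_down : forall q, reachable lam (S q) -> reachable lam q.

Definition out_rate (lam : nat -> R) (q : nat) : R :=
  lam q + (match q with O => 0 | S _ => 1 end).

Definition in_flux (lam : nat -> R) (pi : nat -> R) (q : nat) : R :=
  (match q with O => 0 | S p => pi p * lam p end) + pi (S q) * 1.

Definition stationary_dist (lam : nat -> R) (pi : nat -> R) : Prop :=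
  (forall q, 0 <= pi q) /\
  is_series pi 1 /\
  (forall q, ~ reachable lam q -> pi q = 0) /\
  (forall q, reachable lam q -> pi q * out_rate lam q = in_flux lam pi q).

Definition two_arrival (tau : nat) (k1 k2 : R) (q : nat) : R :=
  if (q <? tau)%nat then 1 + k1 else 1 - k2.

(* E[qbar] for qbar ~ pi, as an extended real (limit of the nondecreasing
   partial sums; may be +infinity). *)
Definition mean_queue (pi : nat -> R) : Rbar :=
  Lim_seq (fun n => sum_n (fun q => INR q * pi q) n).

(* Main.v *)
Require Import Defs.
From Stdlib Require Import Reals Lra Lia Classical ZArith.
From Coquelicot Require Import Coquelicot.
Open Scope R_scope.
Lemma is_series_plusR a b la lb : is_series a la -> is_series b lb -> is_series (fun n => a n + b n) (la+lb).
Proof. intros H1 H2. exact (is_series_plus _ _ _ _ H1 H2). Qed.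
Lemma is_series_scalR c a la : is_series a la -> is_series (fun n => c * a n) (c*la).
Proof. intros H1. exact (is_series_scal _ _ _ H1). Qed.
Lemma is_series_minusR a b la lb : is_series a la -> is_series b lb -> is_series (fun n => a n - b n) (la-lb).
Proof. intros H1 H2. exact (is_series_minus _ _ _ _ H1 H2). Qed.
Lemma sum_n_nonneg a : (forall n, 0 <= a n) -> forall n, 0 <= sum_n a n.
Proof. intros H n; induction n. rewrite sum_O; auto. rewrite sum_Sn. change (plus ?x ?y) with (x + y). specialize (H (S n)); lra. Qed.
Lemma is_series_nonneg a l : (forall n, 0 <= a n) -> is_series a l -> 0 <= l.
Proof. intros H Hs. assert (Hl : Rbar_le (Finite 0) (Finite l)).
 apply (is_lim_seq_le (fun _ => 0) (sum_n a)). intro n; apply sum_n_nonneg; auto.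
 apply is_lim_seq_const. exact Hs. exact Hl. Qed.

Lemma is_series_extR (a b : nat -> R) l : (forall n, a n = b n) -> is_series a l -> is_series b l.
Proof. apply is_series_ext. Qed.
Lemma geom_b k2 : 0 < k2 <= 1 -> is_series (fun k => (1-k2)^k) (/k2).
Proof. intros H. replace (/k2) with (/(1-(1-k2))) by (f_equal; ring).
 apply is_series_geom. rewrite Rabs_pos_eq; lra. Qed.

Lemma arith_geom k2 : 0 < k2 <= 1 -> is_series (fun k => INR k * (1-k2)^k) ((1-k2)/k2^2).
Proof. intros H. set (f := fun k => INR k * (1-k2)^k).
 assert (Hf : forall k, 0 <= f k). { intro k; unfold f; apply Rmult_le_pos. apply pos_INR. apply pow_le; lra. }
 assert (Hcl : forall n, sum_n f n * k2^2 = (1-k2) - INR (S n) * (1-k2)^(S n) + INR n * (1-k2)^(S (S n))).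
 { induction n. rewrite sum_O. unfold f. simpl. ring.
   rewrite sum_Sn. change (plus ?x ?y) with (x + y). rewrite Rmult_plus_distr_r, IHn.
   unfold f. rewrite !S_INR. simpl pow. ring. }
 assert (Hb : forall n, sum_n f n <= (1-k2)/k2^2).
 { intro n. assert (0 < k2^2) by (apply pow_lt; lra).
   apply (Rmult_le_reg_r (k2^2)); auto. unfold Rdiv. rewrite Rmult_assoc, Rinv_l by lra. rewrite Rmult_1_r.
   rewrite Hcl. rewrite !S_INR. simpl pow.
   assert (0 <= (1-k2)^n) by (apply pow_le; lra). assert (0 <= INR n) by apply pos_INR.
   assert (0 <= (1-k2) * (1-k2)^n) by (apply Rmult_le_pos; lra).
   assert (0 <= (1-k2) * (1-k2)^n * (INR n * k2 + 1)) by (apply Rmult_le_pos; nra).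
   nra. }
 destruct (growing_cv (sum_n f)) as [l Hl].
 { intro n. rewrite sum_Sn. change (plus ?x ?y) with (x + y). specialize (Hf (S n)); lra. }
 { exists ((1-k2)/k2^2). intros x [i ->]. apply Hb. }
 assert (Hs : is_series f l). { apply is_lim_seq_Reals in Hl. exact Hl. }
 assert (Hs1 : is_series (fun k => f (S k)) l).
 { apply is_series_incr_1. change (is_series f (l + f 0%nat)). replace (l + f 0%nat) with l. exact Hs. unfold f; simpl; ring. }
 assert (Hs2 : is_series (fun k => f (S k)) ((1-k2) * l + (1-k2) * /k2)).
 { apply is_series_extR with (fun k => (1-k2) * f k + (1-k2) * (1-k2)^k).
   - intro k; unfold f. rewrite S_INR; simpl pow; ring.
   - apply is_series_plusR; apply is_series_scalR; auto. apply geom_b; auto. }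
 apply is_series_unique in Hs1. apply is_series_unique in Hs2. rewrite Hs1 in Hs2.
 replace ((1-k2)/k2^2) with l. exact Hs.
 assert (E : l * k2 = (1-k2) * /k2) by (replace (l*k2) with (l - (1-k2)*l) by ring; rewrite Hs2 at 1; ring).
 replace l with (l*k2/k2) by (field; lra). rewrite E. field; lra.
Qed.

Lemma balance_rec lam pi : stationary_dist lam pi -> forall q, pi (S q) = lam q * pi q.
Proof. intros [_ [_ [Hnr Hbal]]]. induction q.
 - pose proof (Hbal 0%nat (reach0 lam)) as H. unfold out_rate, in_flux in H. lra.
 - destruct (classic (reachable lam (S q))) as [Hr|Hr].
   + pose proof (Hbal _ Hr) as H. unfold out_rate, in_flux in H. lra.
   + rewrite (Hnr _ Hr). rewrite Hnr. ring. intro H. apply Hr. apply reach_down. exact H.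
Qed.

Lemma sum_ones tau k2 : forall n, (n < tau)%nat -> @eq R (sum_n (fun q => (1-k2)^(q - tau)) n) (INR (S n)).
Proof. induction n; intros H. rewrite sum_O. replace (0-tau)%nat with 0%nat by lia. simpl; ring.
 rewrite sum_Sn. change (plus ?x ?y) with (x + y). rewrite IHn by lia.
 replace (S n - tau)%nat with 0%nat by lia. rewrite (S_INR (S n)). simpl pow. ring. Qed.

Lemma sum_lin tau k2 : forall n, (n < tau)%nat -> @eq R (sum_n (fun q => INR q * (1-k2)^(q - tau)) n) (INR n * INR (S n) / 2).
Proof. induction n; intros H. rewrite sum_O. simpl; field.
 rewrite sum_Sn. change (plus ?x ?y) with (x + y). rewrite IHn by lia.
 replace (S n - tau)%nat with 0%nat by lia. rewrite !S_INR. simpl pow. field. Qed.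

Lemma W_series tau k2 : 0 < k2 <= 1 -> is_series (fun q => (1-k2)^(q-tau)) (INR tau + /k2).
Proof. intros Hk. destruct tau as [|t].
 - apply is_series_extR with (fun q => (1-k2)^q). intro q; f_equal; lia.
   replace (INR 0 + /k2) with (/k2) by (simpl; ring). apply geom_b; auto.
 - apply is_series_decr_n with (n := S t). lia.
   change (is_series (fun k => (1-k2)^((S t + k) - S t)) (INR (S t) + /k2 - sum_n (fun q => (1-k2)^(q - S t)) t)).
   rewrite sum_ones by lia.
   apply is_series_extR with (fun k => (1-k2)^k). intro q; f_equal; lia.
   replace (INR (S t) + / k2 - INR (S t)) with (/k2) by ring. apply geom_b; auto.
Qed.

Lemma Q_series tau k2 : 0 < k2 <= 1 -> is_series (fun q => INR q * (1-k2)^(q-tau))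
   (INR tau * (INR tau - 1) / 2 + INR tau / k2 + (1 - k2) / (k2 ^ 2)).
Proof. intros Hk.
 assert (Htail : is_series (fun k => INR tau * (1-k2)^k + INR k * (1-k2)^k) (INR tau / k2 + (1-k2)/k2^2)).
 { apply is_series_plusR. apply is_series_scalR, geom_b; auto. apply arith_geom; auto. }
 destruct tau as [|t].
 - apply is_series_extR with (fun k => INR 0 * (1-k2)^k + INR k * (1-k2)^k).
   intro q. replace (q - 0)%nat with q by lia. simpl; ring.
   replace (INR 0 * (INR 0 - 1) / 2 + INR 0 / k2 + (1 - k2) / k2 ^ 2) with (INR 0 / k2 + (1-k2)/k2^2) by (simpl; field; lra).
   exact Htail.
 - apply is_series_decr_n with (n := S t). lia.
   change (is_series (fun k => INR (S t + k) * (1-k2)^((S t + k) - S t))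
     (INR (S t) * (INR (S t) - 1) / 2 + INR (S t) / k2 + (1 - k2) / (k2 ^ 2) - sum_n (fun q => INR q * (1-k2)^(q - S t)) t)).
   rewrite sum_lin by lia.
   apply is_series_extR with (fun k => INR (S t) * (1-k2)^k + INR k * (1-k2)^k).
   intro q. replace (S t + q - S t)%nat with q by lia. rewrite plus_INR. ring.
   replace (INR (S t) * (INR (S t) - 1) / 2 + INR (S t) / k2 + (1 - k2) / k2 ^ 2 - INR t * INR (S t) / 2)
     with (INR (S t) / k2 + (1-k2)/k2^2) by (rewrite S_INR; field; lra).
   exact Htail.
Qed.

Theorem lemmaC4 (lmax : R) (tau : nat) (k1 k2 : R) (pi : nat -> R) :
  1 < lmax ->
  0 < k1 -> k1 <= lmax - 1 ->
  0 < k2 -> k2 <= 1 ->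
  stationary_dist (two_arrival tau k1 k2) pi ->
  Rbar_le
    (Finite (/ (INR tau + / k2) *
             (INR tau * (INR tau - 1) / 2 + INR tau / k2 + (1 - k2) / (k2 ^ 2))))
    (mean_queue pi).
Proof.
  intros Hl Hk1 Hk1' Hk2 Hk2' Hst.
  pose proof (balance_rec _ _ Hst) as Hrec.
  destruct Hst as [Hpos [Hsum _]].
  set (a := 1 + k1). set (b := 1 - k2).
  assert (Hpi : forall q, pi q = pi 0%nat * a^(min q tau) * b^(q - tau)).
  { induction q. replace (min 0 tau) with 0%nat by lia. replace (0 - tau)%nat with 0%nat by lia. simpl; ring.
    rewrite Hrec, IHq. unfold two_arrival. destruct (Nat.ltb_spec q tau).
    - replace (min (S q) tau) with (S (min q tau)) by lia. replace (S q - tau)%nat with 0%nat by lia.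
      replace (q - tau)%nat with 0%nat by lia. simpl pow. fold a. ring.
    - replace (min (S q) tau) with (min q tau) by lia. replace (S q - tau)%nat with (S (q - tau)) by lia.
      simpl pow. fold b. ring. }
  assert (Hk : 0 < k2 <= 1) by lra.
  pose proof (W_series tau k2 Hk) as HW. pose proof (Q_series tau k2 Hk) as HQ. fold b in HW, HQ.
  set (D := INR tau + / k2) in *.
  set (Nn := INR tau * (INR tau - 1) / 2 + INR tau / k2 + b / (k2 ^ 2)) in *.
  set (m := / D * Nn).
  assert (HD : 0 < D). { unfold D. pose proof (pos_INR tau). pose proof (Rinv_0_lt_compat k2 Hk2). lra. }
  assert (HNn : 0 <= Nn).
  { unfold Nn. assert (0 <= INR tau * (INR tau - 1)).
    { destruct tau. simpl; lra. rewrite S_INR. pose proof (pos_INR tau). nra. }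
    assert (0 <= INR tau / k2) by (unfold Rdiv; apply Rmult_le_pos; [apply pos_INR | left; apply Rinv_0_lt_compat; lra]).
    assert (0 <= b/k2^2) by (unfold Rdiv; apply Rmult_le_pos; [unfold b; lra | left; apply Rinv_0_lt_compat; apply pow_lt; lra]).
    lra. }
  assert (Hm : 0 <= m) by (unfold m; apply Rmult_le_pos; [left; apply Rinv_0_lt_compat; lra | lra]).
  assert (Hfl : exists n : nat, INR n <= m <= INR n + 1).
  { destruct (archimed m) as [H1 H2].
    assert (Hz0 : (0 < up m)%Z) by (apply lt_IZR; simpl; lra).
    exists (Z.to_nat (up m - 1)). rewrite INR_IZR_INZ, Z2Nat.id by lia. rewrite minus_IZR. simpl. lra. }
  destruct Hfl as [n [Hn1 Hn2]].
  set (K := a^(min n tau)).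
  assert (Hterm : forall q, 0 <= (INR q - m) * (a^(min q tau) - K)).
  { intro q. destruct (le_lt_dec q n).
    - assert (INR q <= INR n) by (apply le_INR; lia).
      assert (a^(min q tau) <= K) by (apply Rle_pow; [unfold a; lra | lia]). nra.
    - assert (INR (S n) <= INR q) by (apply le_INR; lia). rewrite S_INR in H.
      assert (K <= a^(min q tau)) by (apply Rle_pow; [unfold a; lra | lia]). nra. }
  assert (Hb0 : forall q, 0 <= b^(q - tau)) by (intro; apply pow_le; unfold b; lra).
  assert (Hpi0 : 0 <= pi 0%nat) by apply Hpos.
  assert (Hex : ex_series (fun q => INR q * pi q)).
  { apply (@ex_series_le R_AbsRing R_CompleteNormedModule) with (fun q => pi 0%nat * a^tau * (INR q * b^(q - tau))).
    - intro q. change (norm ?x) with (Rabs x). rewrite Rabs_pos_eq.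
      rewrite Hpi. assert (a^(min q tau) <= a^tau) by (apply Rle_pow; [unfold a; lra | lia]).
      pose proof (pos_INR q). specialize (Hb0 q).
      assert (0 <= INR q * b^(q-tau)) by nra.
      assert (0 <= pi 0%nat * INR q * b^(q-tau)) by nra. nra.
      apply Rmult_le_pos. apply pos_INR. apply Hpos.
    - eexists. apply is_series_scalR. exact HQ. }
  destruct Hex as [L HL].
  assert (Hmean : mean_queue pi = Finite L). { unfold mean_queue. apply is_lim_seq_unique. exact HL. }
  rewrite Hmean. simpl.
  assert (Ht : is_series (fun q => (INR q * pi q - m * pi q) - pi 0%nat * K * (INR q * b^(q-tau) - m * b^(q-tau)))
                 ((L - m * 1) - pi 0%nat * K * (Nn - m * D))).
  { apply is_series_minusR. apply is_series_minusR. exact HL. apply is_series_scalR. exact Hsum.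
    apply is_series_scalR. apply is_series_minusR. exact HQ. apply is_series_scalR. exact HW. }
  apply is_series_nonneg in Ht.
  - replace (Nn - m * D) with 0 in Ht by (unfold m; field; lra). lra.
  - intro q. rewrite Hpi.
    replace (INR q * (pi 0%nat * a ^ Init.Nat.min q tau * b ^ (q - tau)) - m * (pi 0%nat * a ^ Init.Nat.min q tau * b ^ (q - tau)) -
      pi 0%nat * K * (INR q * b ^ (q - tau) - m * b ^ (q - tau))) with
      ((pi 0%nat * b^(q-tau)) * ((INR q - m) * (a^(min q tau) - K))) by ring.
    apply Rmult_le_pos. apply Rmult_le_pos; auto. auto.
Qed.
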